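(* (1) Let $(\mathcal A_n,\varphi_n)_{n\in\mathbb N_0}$ with coface operators $\delta^k\colon(\mathcal A_{n-1},\varphi_{n-1})\to(\mathcal A_n,\varphi_n)$ ($k=0,\dots,n$) be an SCO in the category of noncommutative probability spaces. Let $(\mathcal A_\infty,\varphi_\infty)$ be the inductive limit of the filtration $\mathcal A_0\xrightarrow{\delta^1}\mathcal A_1\xrightarrow{\delta^2}\mathcal A_2\to\cdots$ with canonical morphisms $\mu_n\colon\mathcal A_n\to\mathcal A_\infty$, and let $\alpha_0\colon\mathcal A_\infty\to\mathcal A_\infty$ be the unique morphism with $\alpha_0\mu_{n-1}=\mu_n\delta^0$ for all $n\in\mathbb N$. Put $\iota_0:=\mu_0\colon\mathcal A_0\to\mathcal A_\infty$ and $\iota_N:=(\alpha_0)^N\iota_0$ for $N\in\mathbb N_0$. Then $(\iota_N)_{N\in\mathbb N_0}$ is spreadable (with respect to $\varphi_\infty$). (2) Let $\mathcal B$ be a unital algebra, $(\mathcal A,\varphi)$ a noncommutative probability space and $\iota_N\colon\mathcal B\to\mathcal A$ ($N\in\mathbb N_0$) unital homomorphisms; let $\mathcal A^f=*_{N=0}^\infty\mathcal B$ with canonical embeddings $\lambda_N$, $\pi\colon\mathcal A^f\to\mathcal A$ the unital homomorphism with $\pi\lambda_N=\iota_N$, and $\varphi^f:=\varphi\circ\pi$. Consider: (a) $(\iota_N)_{N\in\mathbb N_0}$ is spreadable. (b) Let $\mathcal A^f_n$ be the unital subalgebra generated by $\lambda_0(\mathcal B),\dots,\lambda_n(\mathcal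 B)$ and $\varphi^f_n$ the restriction of $\varphi^f$ to it. For $n\in\mathbb N$, $0\le k\le n$, the unital homomorphisms $\delta^k\colon\mathcal A^f_{n-1}\to\mathcal A^f_n$ determined by $\delta^k(\lambda_N(b))=\lambda_N(b)$ if $N<k$ and $\delta^k(\lambda_N(b))=\lambda_{N+1}(b)$ if $N\ge k$ ($b\in\mathcal B$, $0\le N\le n-1$) satisfy $\varphi^f_n\circ\delta^k=\varphi^f_{n-1}$, so that $(\mathcal A^f_n,\varphi^f_n)_{n\in\mathbb N_0}$ with these coface operators is an SCO in the category of noncommutative probability spaces. (c) Let $\mathcal A_n$ be the unital subalgebra of $\mathcal A$ generated by $\iota_0(\mathcal B),\dots,\iota_n(\mathcal B)$ and $\varphi_n$ the restriction of $\varphi$ to it. For all $n\in\mathbb N$, $0\le k\le n$ there exist unital homomorphisms $\delta^k\colon\mathcal A_{n-1}\to\mathcal A_n$ with $\delta^k(\iota_N(b))=\iota_N(b)$ if $N<k$ and $\delta^k(\iota_N(b))=\iota_{N+1}(b)$ if $N\ge k$ ($b\in\mathcal B$), satisfying $\varphi_n\circ\delta^k=\varphi_{n-1}$, such that $(\mathcal A_n,\varphi_n)_{n\in\mathbb N_0}$ with these coface operators is an SCO in the category of noncommutative probability spaces. Then (a) $\Leftrightarrow$ (b), and (c) $\Rightarrow$ (a).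
   Context: The category of noncommutative probability spaces has objects $(\mathcal A,\varphi)$ with $\mathcal A$ a unital associative complex algebra and $\varphi\colon\mathcal A\to\mathbb C$ linear with $\varphi(1)=1$; morphisms $\alpha\colon(\mathcal A,\varphi)\to(\mathcal B,\psi)$ are unital algebra homomorphisms with $\psi\circ\alpha=\varphi$. Inductive limits exist in this category (algebraic direct limit with the induced functional). An SCO in a category is a sequence of objects $F^n$ ($n\in\mathbb N_0$) with morphisms $\delta^k\colon F^{n-1}\to F^n$ ($k=0,\dots,n$) satisfying $\delta^j\delta^i=\delta^i\delta^{j-1}$ for $i<j$. For a sequence of unital homomorphisms $\iota_N\colon\mathcal B\to(\mathcal A,\varphi)$, its distribution is $\varphi^f=\varphi\circ\pi$ on the unital free product $\mathcal A^f=*_{N\ge0}\mathcal B$, where $\pi$ is the unique unital homomorphism with $\pi\circ\lambda_N=\iota_N$; equivalently, the collection of all moments $\varphi(\iota_{N_1}(b_1)\cdots\iota_{N_r}(b_r))$. The sequence is spreadable if for every strictly increasing $i\colon\mathbb N_0\to\mathbb N_0$ the sequence $(\iota_{i(N)})_N$ has the same distribution as $(\iota_N)_N$, i.e. $\varphi(\iota_{N_1}(b_1)\cdots\iota_{N_r}(b_r))=\varphi(\iota_{i(N_1)}(b_1)\cdots\iota_{i(N_r)}(b_r))$ for all $r$, all $N_j\in\mathbb N_0$ (repetitions allowed) and all $b_j\in\mathcal B$. *)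

(* Defs.v *)
From HB Require Import structures.
From mathcomp Require Import all_boot all_order all_algebra.
Set Implicit Arguments. Unset Strict Implicit. Unset Printing Implicit Defensive.
Import GRing.Theory Num.Theory.
Local Open Scope ring_scope.

Section NCP.
Variable C : numClosedFieldType.

Definition is_hom (A B : algType C) (f : A -> B) : Prop :=
  (forall (a : C) (x y : A), f (a *: x + y) = a *: f x + f y) /\
  f 1 = 1 /\ (forall x y : A, f (x * y) = f x * f y).

Definition is_hom_on (A B : algType C) (S : A -> Prop) (f : A -> B) : Prop :=
  (forall (a : C) (x y : A), S x -> S y -> f (a *: x + y) = a *: f x + f y) /\
  f 1 = 1 /\ (forall x y : A, S x -> S y -> f (x * y) = f x * f y).

Definition is_state (A : algType C) (phi : A -> C) : Prop :=
  (forall (a : C) (x y : A), phi (a *: x + y) = a * phi x + phi y) /\ phi 1 = 1.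

Definition is_morph (A B : algType C) (phiA : A -> C) (phiB : B -> C) (f : A -> B) : Prop :=
  is_hom f /\ (forall x, phiB (f x) = phiA x).

(* SCO: A n with functionals phi n; d n k : A n -> A n.+1 is the coface delta^k
   (meaningful for k <= n.+1). *)
Definition is_SCO (A : nat -> algType C) (phi : forall n, A n -> C)
    (d : forall n, nat -> A n -> A n.+1) : Prop :=
  (forall n, is_state (phi n)) /\
  (forall n k, (k <= n.+1)%N -> is_morph (phi n) (phi n.+1) (d n k)) /\
  (forall n i j (x : A n), (i < j)%N -> (j <= n.+2)%N ->
      d n.+1 j (d n i x) = d n.+1 i (d n j.-1 x)).

Definition is_ind_limit (A : nat -> algType C) (f : forall n, A n -> A n.+1)
    (L : algType C) (mu : forall n, A n -> L) : Prop :=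
  (forall n, is_hom (mu n)) /\ (forall n x, mu n.+1 (f n x) = mu n x) /\
  forall (D : algType C) (g : forall n, A n -> D),
    (forall n, is_hom (g n)) -> (forall n x, g n.+1 (f n x) = g n x) ->
    exists h : L -> D, (is_hom h /\ forall n x, h (mu n x) = g n x) /\
      forall h' : L -> D, is_hom h' -> (forall n x, h' (mu n x) = g n x) ->
        forall y, h' y = h y.

Definition is_free_product (B Af : algType C) (lam : nat -> B -> Af) : Prop :=
  (forall N, is_hom (lam N)) /\
  forall (D : algType C) (g : nat -> B -> D), (forall N, is_hom (g N)) ->
    exists h : Af -> D, (is_hom h /\ forall N b, h (lam N b) = g N b) /\
      forall h' : Af -> D, is_hom h' -> (forall N b, h' (lam N b) = g N b) ->
        forall y, h' y = h y.

Definition spreadable (B : Type) (A : algType C) (phi : A -> C)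
    (iota : nat -> B -> A) : Prop :=
  forall i : nat -> nat, (forall m n, (m < n)%N -> (i m < i n)%N) ->
  forall s : seq (nat * B),
    phi (\prod_(p <- s) iota p.1 p.2) = phi (\prod_(p <- s) iota (i p.1) p.2).

End NCP.

Inductive in_gen (C : numClosedFieldType) (A : algType C) (G : A -> Prop) : A -> Prop :=
  | gen_base x : G x -> in_gen G x
  | gen_one : in_gen G 1
  | gen_lin (a : C) x y : in_gen G x -> in_gen G y -> in_gen G (a *: x + y)
  | gen_mul x y : in_gen G x -> in_gen G y -> in_gen G (x * y).

Definition subalg_gen (C : numClosedFieldType) (B : Type) (A : algType C)
    (iota : nat -> B -> A) (n : nat) : A -> Prop :=
  in_gen (fun x => exists N b, (N <= n)%N /\ x = iota N b).

(* index shift of the coface delta^k *)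
Definition cshift (k N : nat) : nat := if (N < k)%N then N else N.+1.

(* condition (b) (indices shifted: n here is the paper's n-1) *)
Definition condB (C : numClosedFieldType) (B Af : algType C)
    (lam : nat -> B -> Af) (phif : Af -> C) : Prop :=
  forall n k, (k <= n.+1)%N ->
  forall delta : Af -> Af, is_hom_on (subalg_gen lam n) delta ->
    (forall N b, (N <= n)%N -> delta (lam N b) = lam (cshift k N) b) ->
    forall x, subalg_gen lam n x -> phif (delta x) = phif x.

Definition condC (C : numClosedFieldType) (B A : algType C)
    (phi : A -> C) (iota : nat -> B -> A) : Prop :=
  exists d : nat -> nat -> A -> A,
    (forall n k, (k <= n.+1)%N ->
       is_hom_on (subalg_gen iota n) (d n k) /\
       (forall x, subalg_gen iota n x -> subalg_gen iota n.+1 (d n k x)) /\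
       (forall N b, (N <= n)%N -> d n k (iota N b) = iota (cshift k N) b) /\
       (forall x, subalg_gen iota n x -> phi (d n k x) = phi x)) /\
    (forall n i j x, (i < j)%N -> (j <= n.+2)%N -> subalg_gen iota n x ->
       d n.+1 j (d n i x) = d n.+1 i (d n j.-1 x)).

(* Main.v *)
Require Import Defs.
From HB Require Import structures.
From mathcomp Require Import all_boot all_order all_algebra.
From mathcomp Require Import zify.
Set Implicit Arguments. Unset Strict Implicit.
Import GRing.Theory Num.Theory.
Local Open Scope ring_scope.

Section Helpers.
Variable C : numClosedFieldType.

Lemma big_all_eq (R : Type) (idx : R) (op : R -> R -> R) (I : Type) (P : I -> bool)
  (s : seq I) (F1 F2 : I -> R) :
  all P s -> (forall p, P p -> F1 p = F2 p) ->
  \big[op/idx]_(p <- s) F1 p = \big[op/idx]_(p <- s) F2 p.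
Proof.
move=> Hs H; elim: s Hs => [|a s IH]; rewrite ?big_nil ?big_cons //=.
by move=> /andP[ha hs]; rewrite H // IH.
Qed.
Arguments big_all_eq {R idx op I P s F1 F2}.

Lemma hom_prod (A B : algType C) (f : A -> B) (I : Type) (s : seq I) (F : I -> A) :
  is_hom f -> f (\prod_(p <- s) F p) = \prod_(p <- s) f (F p).
Proof.
move=> [_ [h1 hm]]; elim: s => [|a s IH]; rewrite ?big_nil ?big_cons //=.
by rewrite hm IH.
Qed.

Lemma hom_homon (A B : algType C) (S : A -> Prop) (f : A -> B) :
  is_hom f -> is_hom_on S f.
Proof. by move=> [h1 [h2 h3]]; split; [|split] => // *; rewrite ?h1 ?h3. Qed.

Lemma gen_prod (B : Type) (A : algType C) (lam : nat -> B -> A) n (s : seq (nat * B)) :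
  all (fun p => p.1 <= n)%N s -> subalg_gen lam n (\prod_(p <- s) lam p.1 p.2).
Proof.
elim: s => [|a s IH]; rewrite ?big_nil ?big_cons /=.
  by move=> _; apply: gen_one.
move=> /andP[ha hs]; apply: gen_mul; last exact: IH.
by apply: gen_base; exists a.1, a.2.
Qed.

Lemma homon_prod (B : Type) (A A' : algType C) (lam : nat -> B -> A) n (f : A -> A')
  (s : seq (nat * B)) :
  is_hom_on (subalg_gen lam n) f -> all (fun p => p.1 <= n)%N s ->
  f (\prod_(p <- s) lam p.1 p.2) = \prod_(p <- s) f (lam p.1 p.2).
Proof.
move=> [_ [h1 hm]]; elim: s => [|a s IH]; rewrite ?big_nil ?big_cons //=.
move=> /andP[ha hs]; rewrite hm ?IH //; last exact: gen_prod.
by apply: gen_base; exists a.1, a.2.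
Qed.

Lemma gen_ext (B : Type) (A : algType C) (lam : nat -> B -> A) n (f g : A -> C) :
  (forall a x y, subalg_gen lam n x -> subalg_gen lam n y -> f (a *: x + y) = a * f x + f y) ->
  (forall a x y, subalg_gen lam n x -> subalg_gen lam n y -> g (a *: x + y) = a * g x + g y) ->
  (forall s : seq (nat * B), all (fun p => p.1 <= n)%N s ->
     f (\prod_(p <- s) lam p.1 p.2) = g (\prod_(p <- s) lam p.1 p.2)) ->
  forall x, subalg_gen lam n x -> f x = g x.
Proof.
move=> hf hg hs.
pose P y := forall s : seq (nat * B), all (fun p => p.1 <= n)%N s ->
  f (\prod_(p <- s) lam p.1 p.2 * y) = g (\prod_(p <- s) lam p.1 p.2 * y).
have key : forall x, subalg_gen lam n x -> forall y, subalg_gen lam n y -> P y -> P (x * y).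
  move=> x Hx; elim: Hx => {x}.
  - move=> x [N [b [hN ->]]] y _ Py s hs'.
    have E : \prod_(p <- s) lam p.1 p.2 * lam N b =
             \prod_(p <- s ++ [:: (N, b)]) lam p.1 p.2 by rewrite big_cat big_seq1.
    rewrite mulrA E; apply: Py; by rewrite all_cat hs' /= hN.
  - by move=> y _ Py s hs'; rewrite mul1r; apply: Py.
  - move=> a x1 x2 h1 IH1 h2 IH2 y hy Py s hs'.
    have gs := @gen_prod _ _ lam n s hs'.
    rewrite mulrDl -scalerAl mulrDr -scalerAr.
    have g1 : subalg_gen lam n (\prod_(p <- s) lam p.1 p.2 * (x1 * y)).
      by apply: gen_mul => //; apply: gen_mul.
    have g2 : subalg_gen lam n (\prod_(p <- s) lam p.1 p.2 * (x2 * y)).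
      by apply: gen_mul => //; apply: gen_mul.
    by rewrite hf // hg // IH1 // IH2.
  - move=> x1 x2 h1 IH1 h2 IH2 y hy Py.
    have : P (x1 * (x2 * y)).
      apply: IH1; first by apply: gen_mul.
      by apply: IH2.
    by rewrite /P mulrA.
have P1 : P 1 by move=> s hs'; rewrite mulr1; apply: hs.
move=> x hx; have := key x hx 1 (gen_one _) P1 [::] isT.
by rewrite big_nil !mul1r !mulr1.
Qed.

Lemma incr_gap (i : nat -> nat) n : (forall a b, (a < b <= n)%N -> (i a < i b)%N) ->
  forall a b, (a <= b)%N -> (b <= n)%N -> (i a + (b - a) <= i b)%N.
Proof.
move=> Hi a; elim=> [|b IH] hab hbn.
  by move: hab; rewrite leqn0 => /eqP->; rewrite subnn addn0.
case: (ltnP a b.+1) => h.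
  have h1 := IH (ltnSE h) (ltnW hbn).
  have h2 : (i b < i b.+1)%N by apply: Hi; rewrite ltnSn hbn.
  lia.
have -> : a = b.+1 by apply/eqP; rewrite eqn_leq hab h.
by rewrite subnn addn0.
Qed.

Lemma bound_seq (B : Type) (s : seq (nat * B)) k :
  exists n, (k <= n)%N /\ all (fun p => p.1 <= n)%N s.
Proof.
elim: s => [|a s [n [hk hs]]]; first by exists k.
exists (maxn a.1 n); split; first lia.
rewrite /= leq_maxl /=; apply: sub_all hs => p /=; lia.
Qed.

Lemma cshift_incr k m n : (m < n)%N -> (cshift k m < cshift k n)%N.
Proof. rewrite /cshift; case: ifP; case: ifP; lia. Qed.

Lemma shift_to_spread (B : Type) (A : algType C) (phi : A -> C) (iota : nat -> B -> A) :
  (forall k (s : seq (nat * B)), phi (\prod_(p <- s) iota p.1 p.2) =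
                                 phi (\prod_(p <- s) iota (cshift k p.1) p.2)) ->
  spreadable phi iota.
Proof.
move=> H.
have claim : forall m n (i : nat -> nat), (forall a b, (a < b <= n)%N -> (i a < i b)%N) ->
   (i n - n <= m)%N -> forall s : seq (nat * B), all (fun p => p.1 <= n)%N s ->
   phi (\prod_(p <- s) iota p.1 p.2) = phi (\prod_(p <- s) iota (i p.1) p.2).
  elim=> [|m IH] n i Hi Hm s Hs.
    congr (phi _); apply: (big_all_eq Hs) => p hp.
    have h1 := incr_gap Hi (leq0n p.1) hp.
    have h2 := incr_gap Hi hp (leqnn n).
    have -> : i p.1 = p.1 by lia.
    by [].
  case: (leqP (i n - n) m) => Hm'; first exact: IH Hm' s Hs.
  have exP : exists N, (N < i N)%N by exists n; lia.
  case: (ex_minnP exP) => k hk hmin.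
  have hkn : (k <= n)%N by apply: hmin; lia.
  have Hlow : forall N, (N < k)%N -> i N = N.
    move=> N hN.
    have h1 := incr_gap Hi (leq0n N) (leq_trans (ltnW hN) hkn).
    case: (ltnP N (i N)) => h2; last lia.
    have := hmin N h2; lia.
  have Hup : forall N, (k <= N <= n)%N -> (k < i N)%N.
    move=> N /andP[h1 h2]; have := incr_gap Hi h1 h2; lia.
  pose i' N := if (N < k)%N then N else (i N - 1)%N.
  have Hi' : forall a b, (a < b <= n)%N -> (i' a < i' b)%N.
    move=> a b /andP[hab hbn]; rewrite /i'.
    case: ifP => ha; case: ifP => hb.
    - lia.
    - have := Hup b; lia.
    - lia.
    - have := Hi a b; rewrite hab hbn /=; have := Hup a; lia.
  have Hm2 : (i' n - n <= m)%N by rewrite /i'; case: ifP; lia.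
  have E1 : \prod_(p <- s) iota (i p.1) p.2 =
            \prod_(p <- s) iota (cshift k (i' p.1)) p.2.
    apply: (big_all_eq Hs) => p hp; congr iota; rewrite /i' /cshift.
    case: (ltnP p.1 k) => h1.
      by rewrite h1 Hlow.
    have h3 := Hup p.1; rewrite h1 hp /= in h3.
    have h4 := h3 isT.
    case: ifP; lia.
  rewrite E1.
  have := H k [seq (i' p.1, p.2) | p <- s]; rewrite !big_map /= => <-.
  exact: IH Hi' Hm2 s Hs.
move=> i Hi s.
have [n [_ Hs]] := bound_seq s 0.
apply: (claim (i n - n)%N n i) => //.
by move=> a b /andP[h _]; apply: Hi.
Qed.

Unset Implicit Arguments.
Section Cos.
Variables (A : nat -> algType C) (d : forall n, nat -> A n -> A n.+1).
Hypothesis Hcos : forall n i j (x : A n), (i < j)%N -> (j <= n.+2)%N ->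
      d n.+1 j (d n i x) = d n.+1 i (d n j.-1 x).

Fixpoint D0 (m : nat) : A 0 -> A m :=
  match m return A 0 -> A m with
  | 0 => fun x => x
  | m'.+1 => fun x => d m' 0 (D0 m' x)
  end.

Fixpoint E (m N : nat) : A 0 -> A m :=
  match m return A 0 -> A m with
  | 0 => fun x => x
  | m'.+1 => fun x => if (m'.+1 <= N)%N then d m' 0 (D0 m' x) else d m' m'.+1 (E m' N x)
  end.

Lemma D0lift m j x : (j <= m)%N -> d m j (D0 m x) = d m 0 (D0 m x).
Proof.
elim: m j x => [|m IH] j x hj.
  by move: hj; rewrite leqn0 => /eqP->.
case: j hj => [|j] hj //.
rewrite [D0 m.+1 x]/= Hcos //=; last lia.
by rewrite IH.
Qed.

Lemma Eshift m N k x : (N <= m)%N -> (k <= m.+1)%N -> d m k (E m N x) = E m.+1 (cshift k N) x.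
Proof.
elim: m N k x => [|m IH] N k x hN hk.
  move: hN; rewrite leqn0 => /eqP ->.
  by case: k hk => [|[|k]] //= _.
case: (ltnP m N) => hNm.
  have eN : N = m.+1 by lia.
  subst N.
  have -> : E m.+1 m.+1 x = D0 m.+1 x by rewrite /= leqnn.
  case: (ltnP m.+1 k) => hkm.
    have ek : k = m.+2 by lia.
    subst k; rewrite /cshift ltnSn /=.
    by rewrite ltnn ltnSn.
  rewrite /cshift ltnNge hkm /=.
  rewrite D0lift //.
  by rewrite leqnn.
have -> : E m.+1 N x = d m m.+1 (E m N x) by rewrite /= ltnNge hNm.
case: (ltnP m.+1 k) => hkm.
  have ek : k = m.+2 by lia.
  have h1 : (N < m.+2)%N = true by lia.
  have h2 : (m.+2 <= N)%N = false by lia.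
  have h6 : (m.+1 <= N)%N = false by lia.
  by subst k; rewrite /cshift h1 /= h2 h6.
have hk2 : (k < m.+2)%N by lia.
rewrite -(Hcos m k m.+2) //.
have hk3 : (k <= m.+1)%N by lia.
rewrite IH //.
have h5 : (m.+2 <= cshift k N)%N = false by rewrite /cshift; case: ifP; lia.
by rewrite [E m.+2 _ x]/= h5.
Qed.

End Cos.

End Helpers.
Arguments big_all_eq {R idx op I P s F1 F2}.
Arguments D0 {C A} d m.
Arguments E {C A} d m N.
Arguments Eshift {C A d} Hcos m N k x _ _.

Theorem mainTheorem5 (C : numClosedFieldType) :
  (* (1) *)
  (forall (A : nat -> algType C) (phi : forall n, A n -> C)
          (d : forall n, nat -> A n -> A n.+1),
     is_SCO phi d ->
     forall (L : algType C) (mu : forall n, A n -> L) (phiL : L -> C),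
       is_ind_limit (fun n => d n n.+1) mu ->
       is_state phiL -> (forall n x, phiL (mu n x) = phi n x) ->
       forall alpha0 : L -> L,
         is_morph phiL phiL alpha0 ->
         (forall n x, alpha0 (mu n x) = mu n.+1 (d n 0%N x)) ->
         spreadable phiL (fun N x => iter N alpha0 (mu 0%N x)))
  /\
  (* (2) *)
  (forall (B A : algType C) (phi : A -> C) (iota : nat -> B -> A),
     is_state phi -> (forall N, is_hom (iota N)) ->
     forall (Af : algType C) (lam : nat -> B -> Af),
       is_free_product lam ->
       forall pi : Af -> A, is_hom pi -> (forall N b, pi (lam N b) = iota N b) ->
         (spreadable phi iota <-> condB lam (fun x => phi (pi x))) /\
         (condC phi iota -> spreadable phi iota)).
Proof.
split.
  move=> A phi d [Hst [Hmor Hcos]] L mu phiL [Hmu [Hlim _]] _ HphiL alpha0 _ Hal.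
  have iotaE : forall N x, iter N alpha0 (mu 0%N x) = mu N (D0 d N x).
    by elim=> [|N IH] x //=; rewrite IH Hal.
  have muE : forall m N x, (N <= m)%N -> mu N (D0 d N x) = mu m (E d m N x).
    elim=> [|m IH] N x hN.
      by move: hN; rewrite leqn0 => /eqP ->.
    case: (ltnP m N) => hNm.
      have eN : N = m.+1 by lia.
      by subst N; rewrite /= leqnn.
    rewrite IH // /= ltnNge hNm /=.
    by rewrite (Hlim m).
  apply: shift_to_spread => k s.
  have [n [hk Hs]] := bound_seq s k.
  have [Hdh Hdp] := Hmor n k (leqW hk).
  have Hs' : all (fun p => cshift k p.1 <= n.+1)%N s.
    by apply: sub_all Hs => p /=; rewrite /cshift; case: ifP => /=; lia.
  rewrite (big_all_eq (F2 := fun p => mu n (E d n p.1 p.2)) Hs); last first.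
    by move=> p hp; rewrite iotaE (muE n).
  rewrite (big_all_eq (F1 := fun p => iter (cshift k p.1) alpha0 (mu 0%N p.2)) (F2 := fun p => mu n.+1 (E d n.+1 (cshift k p.1) p.2)) Hs'); last first.
    by move=> p hp; rewrite iotaE (muE n.+1).
  rewrite -!hom_prod // !HphiL -Hdp hom_prod //.
  congr (phi _ _); apply: (big_all_eq Hs) => p hp.
  by rewrite (Eshift Hcos) //; apply: leqW.
move=> B A phi iota Hphi Hiota Af lam [Hlam Hfree] pi Hpi Hpil.
have [Hpl [Hp1 Hpm]] := Hpi.
have [Hphl _] := Hphi.
split; [split|].
- move=> Hsp n k hk delta Hd Hdl.
  apply: gen_ext.
  + move=> a x y hx hy; have [hl _] := Hd; by rewrite hl // Hpl Hphl.
  + by move=> a x y hx hy; rewrite Hpl Hphl.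
  + move=> s Hs; rewrite (homon_prod Hd Hs).
    rewrite (big_all_eq (F2 := fun p => lam (cshift k p.1) p.2) Hs); last first.
      by move=> p hp; rewrite Hdl.
    rewrite !hom_prod //.
    under eq_bigr do rewrite Hpil.
    under [in RHS]eq_bigr do rewrite Hpil.
    symmetry; apply: Hsp => m m'; apply: cshift_incr.
- move=> HB; apply: shift_to_spread => k s.
  have [n [hk Hs]] := bound_seq s k.
  have [h [[Hh Hhl] _]] := Hfree Af (fun N b => lam (cshift k N) b) (fun N => Hlam _).
  have := HB n k (leqW hk) h (hom_homon (subalg_gen lam n) Hh) (fun N b _ => Hhl N b) _ (@gen_prod _ _ _ lam n s Hs).
  rewrite !hom_prod //.
  under eq_bigr do rewrite Hhl Hpil.
  under [in RHS]eq_bigr do rewrite Hpil.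
  by move=> ->.
- move=> [dd [Hd _]]; apply: shift_to_spread => k s.
  have [n [hk Hs]] := bound_seq s k.
  have [Hh [_ [Hdi Hdp]]] := Hd n k (leqW hk).
  rewrite -(Hdp _ (@gen_prod _ _ _ iota n s Hs)).
  rewrite (homon_prod (lam:=iota) (n:=n) (f := dd n k) Hh Hs).
  congr (phi _); apply: (big_all_eq Hs) => p hp.
  by rewrite Hdi.
Qed.
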